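(* Let $\mathcal{G}=(V,E)$ be a connected hypergraph with $n$ vertices and minimum edge cardinality $3$ (i.e. $\min_{e\in E}|e|=3$). Let $\lambda_{\max}$ be the largest eigenvalue of $A_{\mathcal{G}}$, with unit eigenvector $X_1=((X_1)_1,\dots,(X_1)_n)^t$ having positive entries, let $\alpha=\min_i (X_1)_i$, and let $\theta$ be the second largest eigenvalue of $A_{\mathcal{G}}$ in absolute value (i.e., if $\lambda_1=\lambda_{\max}\ge\lambda_2\ge\dots\ge\lambda_n$ are the eigenvalues, $\theta=\max_{l\ge 2}|\lambda_l|$). Then $$\operatorname{diam}(\mathcal{G})\le\left\lfloor 1+\frac{\log\big((1-\alpha^2)/\alpha^2\big)}{\log(\lambda_{\max}/\theta)}\right\rfloor.$$
   Context: A hypergraph $\mathcal{G}=(V,E)$ has a finite vertex set $V$ and a set $E$ of subsets of $V$ (edges), each of cardinality at least $2$. Two distinct vertices $i,j$ are adjacent if some edge contains both. The adjacency matrix $A_{\mathcal{G}}$ has $(A_{\mathcal{G}})_{ij}=\sum_{e\in E,\, i,j\in e}\frac{1}{|e|-1}$ for $i\ne j$ and zero diagonal. A path of length $l$ between $v_0$ and $v_l$ is an alternating sequence $v_0e_1v_1e_2\dots e_lv_l$ of distinct vertices and distinct edges with $v_{i-1},v_i\in e_i$; the distance $d(i,j)$ is the minimum length of an $i$–$j$ path, and $\operatorname{diam}(\mathcal{G})=\max_{i,j\in V}d(i,j)$. $\mathcal{G}$ is connected if any two vertices are joined by a path. *)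

(* Defs.v *)
From HB Require Import structures.
From mathcomp Require Import all_boot all_order all_algebra.
From mathcomp Require Import reals exp.
Set Implicit Arguments. Unset Strict Implicit. Unset Printing Implicit Defensive.
Import Order.TTheory GRing.Theory Num.Theory.
Local Open Scope ring_scope.

(* A hypergraph on vertex set 'I_n is given by its edge set
   E : {set {set 'I_n}} (each edge of cardinality >= 2 by hypothesis). *)

Definition hadj (R : fieldType) (n : nat) (E : {set {set 'I_n}}) : 'M[R]_n :=
  \matrix_(i, j) (if i == j then 0
                  else \sum_(e in E | (i \in e) && (j \in e)) ((#|e| - 1)%N%:R)^-1).

(* There is a path of length l from u to v: an alternating sequence
   v_0 e_1 v_1 ... e_l v_l of distinct vertices and distinct edges of E with
   v_{k-1}, v_k in e_k, v_0 = u, v_l = v. *)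
Definition hpathb (n : nat) (E : {set {set 'I_n}}) (u v : 'I_n) (l : nat) : bool :=
  [exists vs : (l.+1).-tuple 'I_n, exists es : l.-tuple {set 'I_n},
     [&& uniq vs, uniq es, all (fun e => e \in E) es,
         tnth vs ord0 == u, tnth vs ord_max == v &
         [forall k : 'I_l, (nth u vs k \in tnth es k) && (nth u vs k.+1 \in tnth es k)]]].

Definition hconnected (n : nat) (E : {set {set 'I_n}}) : Prop :=
  forall u v : 'I_n, exists l, hpathb E u v l.

(* Since the vertices of a path are
   distinct, every path has length < n, so searching l in [0, n) is exhaustive
   (the value n is returned only when no path exists). *)
Definition hdist (n : nat) (E : {set {set 'I_n}}) (u v : 'I_n) : nat :=
  find (hpathb E u v) (iota 0 n).

Definition hdiam (n : nat) (E : {set {set 'I_n}}) : nat :=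
  \max_(u : 'I_n) \max_(v : 'I_n) hdist E u v.

(* Main.v *)
Require Import Defs.
From HB Require Import structures.
From mathcomp Require Import all_boot all_order all_algebra.
From mathcomp Require Import reals exp.
From mathcomp Require Import complex.
From mathcomp Require Import ring lra.
Import Order.TTheory GRing.Theory Num.Theory.
Local Open Scope ring_scope.
Set Implicit Arguments. Unset Strict Implicit. Unset Printing Implicit Defensive.

Section Comb.
Variable (n : nat) (E : {set {set 'I_n}}).

Definition incT := ('I_n + {set 'I_n})%type.
Definition inc (x y : incT) : bool :=
  match x, y with
  | inl i, inr e => (e \in E) && (i \in e)
  | inr e, inl i => (e \in E) && (i \in e)
  | _, _ => false
  end.

Fixpoint okp (u : 'I_n) (vs : seq 'I_n) (es : seq {set 'I_n}) : bool :=
  match vs, es with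
  | [::], [::] => true
  | w :: vs', e :: es' => [&& e \in E, u \in e, w \in e & okp w vs' es']
  | _, _ => false
  end.

Lemma okp_size u vs es : okp u vs es -> size es = size vs.
Proof.
elim: vs u es => [|w vs IH] u [|e es] //= /and4P[_ _ _ /IH ->] //.
Qed.

Lemma okp_all u vs es : okp u vs es -> all (fun e => e \in E) es.
Proof.
elim: vs u es => [|w vs IH] u [|e es] //= /and4P[-> _ _ /IH] //.
Qed.

Lemma okp_nth u vs es k : okp u vs es -> (k < size es)%N ->
  (nth u (u :: vs) k \in nth set0 es k) && (nth u (u :: vs) k.+1 \in nth set0 es k).
Proof.
elim: vs u es k => [|w vs IH] u [|e es] k //=.
case/and4P => eE ue we ok; case: k => [|k] /=; first by rewrite ue we.
move=> hk; have := IH w es k ok hk.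
have sz := okp_size ok.
rewrite (set_nth_default w u) /=; last by rewrite ltnS -sz ltnW.
rewrite (set_nth_default w u) /=; first by [].
by rewrite -sz.
Qed.

Lemma okp_hpath u vs es : okp u vs es -> uniq (u :: vs) -> uniq es ->
  hpathb E u (last u vs) (size vs).
Proof.
move=> ok uv ue.
have sz := okp_size ok.
have Hv : size (u :: vs) == (size vs).+1 by [].
have Hes : size es == size vs by rewrite sz.
apply/existsP; exists (Tuple Hv); apply/existsP; exists (Tuple Hes).
apply/andP; split; first by [].
apply/and5P; split => //.
- by have := okp_all ok.
- by rewrite (tnth_nth u) -[X in _ == X]/(last u (u :: vs)) -nth_last.
- apply/forallP => k; rewrite (tnth_nth set0) /=.
  by apply: okp_nth => //; rewrite sz.
Qed.

Lemma extract v : forall k (s : seq incT) u, (size s <= k)%N ->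
  path inc (inl u) s -> uniq (inl u :: s) -> last (inl u) s = inl v ->
  exists vs es, [/\ okp u vs es, last u vs = v, uniq (u :: vs), uniq es &
     [/\ size s = (size vs).*2, (forall x, x \in vs -> inl x \in s) &
         (forall e, e \in es -> inr e \in s)]].
Proof.
elim => [|k IH] s u.
  rewrite leqn0 => /nilP -> _ _ /= [<-].
  by exists [::], [::].
case: s => [|[i|e] s].
- move=> _ _ _ /= [<-]; by exists [::], [::].
- by [].
case: s => [|[w|e'] s] //; last by move=> _ /=; rewrite andbF.
rewrite /= => hs /and3P[/andP[eE ue] /andP[_ we] pth].
case/and4P => nu nes nws us hl.
have nus : inl u \notin s by apply: contra nu => h; rewrite !inE h !orbT.
have nuw : u != w by apply: contra nu => /eqP ->; rewrite !inE eqxx orbT.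
have nes' : inr e \notin s by apply: contra nes => h; rewrite inE h orbT.
have := IH s w (ltnSE (ltnW hs)) pth (_ : uniq (inl w :: s)) hl.
case; first by rewrite /= nws us.
move=> vs [es [ok lv uvs ues [sz mv me]]].
exists (w :: vs), (e :: es); split => //=.
- by rewrite eE ue we ok.
- rewrite -[_ && uniq vs]/(uniq (w :: vs)) uvs andbT inE negb_or nuw /=.
  by apply: contra nus => /mv.
- by rewrite ues andbT; apply: contra nes' => /me.
- split.
  + by rewrite sz doubleS.
  + move=> x; rewrite !inE => /orP[/eqP -> | /mv ->]; by rewrite ?eqxx ?orbT.
  + move=> x; rewrite !inE => /orP[/eqP -> | /me ->]; by rewrite ?eqxx ?orbT.
Qed.

Lemma size_shorten (T : eqType) (x : T) p : (size (shorten x p) <= size p)%N.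
Proof.
elim: p x => //= y p IH x; case: ifP => _ /=.
  exact: leq_trans (IH x) (leqnSn _).
by rewrite ltnS.
Qed.

Lemma walk_to_hpath u v (s : seq incT) :
  path inc (inl u) s -> last (inl u) s = inl v ->
  exists2 l, (l.*2 <= size s)%N & hpathb E u v l.
Proof.
move=> pth hl.
have hsz := size_shorten (inl u) s.
case: (shortenP pth) hl hsz => s' pth' us' sub hl hsz.
have [vs [es [ok lv uvs ues [sz _ _]]]] := extract (leqnn _) pth' us' hl.
exists (size vs); last by rewrite -lv; exact: (okp_hpath ok uvs ues).
by rewrite -sz.
Qed.

End Comb.

Section Walk.
Variables (R : realType) (n : nat) (E : {set {set 'I_n}}).

Definition mpow (M : 'M[R]_n) t := iter t (fun B => B *m M) 1%:M.

Lemma sum_neq0_ex (I : finType) (P : pred I) (F : I -> R) :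
  \sum_(i | P i) F i != 0 -> exists i, P i && (F i != 0).
Proof.
case: (pickP [pred i | P i && (F i != 0)]) => [i Hi | H0]; first by exists i.
move=> /eqP []; apply: big1 => i Pi; have := H0 i; rewrite /= Pi /=.
by move/negbFE/eqP.
Qed.


Lemma hadj_neq0 i j : hadj R E i j != 0 ->
  exists e, [&& e \in E, i \in e & j \in e].
Proof.
rewrite mxE; case: (i =P j) => /= _ H; first by rewrite eqxx in H. case: (sum_neq0_ex H) => [e /andP[/andP[eE /andP[ie je]] _]].
by exists e; rewrite eE ie je.
Qed.

Lemma walk u t v : mpow (hadj R E) t u v != 0 ->
  exists s, [/\ path (inc E) (inl u) s, last (inl u) s = inl v & (size s <= t.*2)%N].
Proof.
elim: t v => [|t IH] v.
  rewrite /mpow /= mxE; case: (u =P v) => [<- _|_]; last by rewrite eqxx.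
  by exists [::].
rewrite /mpow /= -/(mpow _ t) mxE => /sum_neq0_ex [w /= ].
rewrite mulf_eq0 negb_or => /andP[/IH [s [ps ls zs]] /hadj_neq0 [e /and3P[eE we ve]]].
exists (rcons (rcons s (inr e)) (inl v)); split.
- by rewrite !rcons_path ps ls last_rcons /= eE we ve.
- by rewrite last_rcons.
- by rewrite !size_rcons doubleS !ltnS.
Qed.

Lemma mpow_path u v t : mpow (hadj R E) t u v != 0 -> exists2 l, (l <= t)%N & hpathb E u v l.
Proof.
move=> /walk [s [ps ls zs]]; have [l hl hp] := walk_to_hpath ps ls.
by exists l => //; rewrite -leq_double (leq_trans hl).
Qed.


End Walk.



Lemma ex_max (R : realType) (n : nat) (F : 'I_n -> R) (k : 'I_n) :
  exists i, forall j, F j <= F i.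
Proof. by case: (@arg_maxP _ _ _ k predT F isT) => i _ H; exists i => j; apply: H. Qed.

Lemma ex_min (R : realType) (n : nat) (F : 'I_n -> R) (k : 'I_n) :
  exists i, forall j, F i <= F j.
Proof. by case: (@arg_minP _ _ _ k predT F isT) => i _ H; exists i => j; apply: H. Qed.

Lemma nonneg_sum0 (R : realType) (n : nat) (F : 'I_n -> R) :
  (forall j, 0 <= F j) -> \sum_j F j <= 0 -> forall j, F j = 0.
Proof.
move=> h0 hs j; have hs0 : \sum_j F j = 0.
  by apply/eqP; rewrite eq_le hs sumr_ge0.
by apply: (psumr_eq0P (fun j _ => h0 j) hs0).
Qed.

Section PF.
Variables (R : realType) (n : nat) (E : {set {set 'I_n}}).
Hypothesis hE2 : forall e, e \in E -> (2 <= #|e|)%N.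
Hypothesis hcon : hconnected E.
Variables (X : 'cV[R]_n) (l0 : R).
Hypothesis hX : hadj R E *m X = l0 *: X.
Hypothesis Xpos : forall i, 0 < X i 0.
Local Notation A := (hadj R E).

Lemma hadj_ge0 i j : 0 <= A i j.
Proof.
rewrite mxE; case: (i == j) => //; apply: sumr_ge0 => e _.
by rewrite invr_ge0 ler0n.
Qed.

Lemma hadj_sym i j : A i j = A j i.
Proof.
rewrite !mxE eq_sym; case: (j == i) => //; apply: eq_bigl => e.
by rewrite [X in _ && X]andbC.
Qed.

Lemma hadj_gt0 e i j : e \in E -> i \in e -> j \in e -> i != j -> 0 < A i j.
Proof.
move=> eE ie je nij; rewrite mxE (negPf nij) (bigD1 e) /=; last by rewrite eE ie je.
have h1 : 0 < ((#|e| - 1)%N%:R : R)^-1 by rewrite invr_gt0 ltr0n subn_gt0 hE2.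
apply: (lt_le_trans h1); rewrite lerDl; apply: sumr_ge0 => *.
by rewrite invr_ge0 ler0n.
Qed.

Lemma conn_closed (S : pred 'I_n) :
  (forall i j, 0 < A i j -> S i -> S j) -> forall u v, S u -> S v.
Proof.
move=> HS u v Su; have [l] := hcon u v.
case/existsP => vs /existsP [es /andP[uv /and5P[ues allE /eqP h0 /eqP hmax /forallP hk]]].
have key : forall k, (k <= l)%N -> S (nth u vs k).
  elim => [|k IH] hkl; first by rewrite -(tnth_nth u vs ord0) h0.
  have kl : (k < l)%N by [].
  have /andP[h1 h2] := hk (Ordinal kl).
  have eE : tnth es (Ordinal kl) \in E := allP allE _ (mem_tnth _ es).
  apply: (HS (nth u vs k)); last exact: IH (ltnW kl).
  apply: (hadj_gt0 eE h1 h2).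
  by rewrite nth_uniq ?size_tuple ?ltnS ?(ltnW kl) // eqn_leq ltnn andbF.
by have := key l (leqnn l); rewrite -(tnth_nth u vs ord_max) hmax.
Qed.

Lemma AX i : \sum_j A i j * X j 0 = l0 * X i 0.
Proof. by have := congr1 (fun M : 'M[R]_(n,1) => M i 0) hX; rewrite !mxE. Qed.

Lemma pf_bound (y : 'cV[R]_n) mu : A *m y = mu *: y -> y != 0 ->
  `|mu| <= l0 /\ (`|mu| = l0 -> exists2 c, 0 < c & forall i, `|y i 0| = c * X i 0).
Proof.
move=> hy ynz.
have Ay i : \sum_j A i j * y j 0 = mu * y i 0.
  by have := congr1 (fun M : 'M[R]_(n,1) => M i 0) hy; rewrite !mxE.
have [k yk] : exists k, y k 0 != 0.
  apply/existsP; apply: contraR ynz; rewrite negb_exists => /forallP H.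
  by apply/eqP/matrixP => i j; rewrite ord1 mxE; apply/eqP; have := H i; rewrite negbK.
pose F i := `|y i 0| / X i 0.
have [im His] := ex_max F k.
pose c := F im.
have hyc i : `|y i 0| <= c * X i 0.
  by have := His i; rewrite /F ler_pdivrMr ?Xpos.
have Fk : 0 < F k by rewrite /F divr_gt0 ?normr_gt0 ?Xpos.
have cpos : 0 < c by apply: lt_le_trans Fk (His k).
have yis : `|y im 0| = c * X im 0 by rewrite /c /F divfK // gt_eqF ?Xpos.
have chain i : `|mu| * `|y i 0| <= \sum_j A i j * `|y j 0|.
  rewrite -normrM -Ay; apply: le_trans (ler_norm_sum _ _ _) _.
  by apply: ler_sum => j _; rewrite normrM ger0_norm ?hadj_ge0.
have chain2 i : \sum_j A i j * `|y j 0| <= c * l0 * X i 0.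
  rewrite -mulrA -AX mulr_sumr; apply: ler_sum => j _.
  by rewrite mulrCA ler_wpM2l ?hadj_ge0.
have h1 : `|mu| <= l0.
  have := le_trans (chain im) (chain2 im); rewrite yis.
  have hp : 0 < c * X im 0 by rewrite mulr_gt0 ?Xpos.
  move=> h; rewrite -(ler_pM2r hp); apply: le_trans h _.
  by rewrite le_eqVlt; apply/orP; left; apply/eqP; ring.
split => // hmu; exists c => // i.
pose w j := c * X j 0 - `|y j 0|.
have w0 j : 0 <= w j by rewrite /w subr_ge0.
suff : w i == 0 by rewrite /w subr_eq0 => /eqP.
apply: (@conn_closed (fun j => w j == 0) _ im); last by rewrite /w yis subrr.
move=> a b hab /eqP wa.
have hs : \sum_j A a j * w j <= 0.
  have -> : \sum_j A a j * w j = c * l0 * X a 0 - \sum_j A a j * `|y j 0|.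
    rewrite /w -mulrA -AX mulr_sumr -sumrB; apply: eq_bigr => j _; ring.
  have ya : `|y a 0| = c * X a 0 by apply/esym/eqP; rewrite -subr_eq0; apply/eqP.
  have h := chain a; rewrite hmu ya in h.
  rewrite subr_le0; apply: le_trans h.
  by rewrite le_eqVlt; apply/orP; left; apply/eqP; ring.
have := nonneg_sum0 (fun j => mulr_ge0 (hadj_ge0 a j) (w0 j)) hs b.
by move/eqP; rewrite mulf_eq0 gt_eqF.
Qed.

Lemma pf_eig (y : 'cV[R]_n) (k : 'I_n) : A *m y = l0 *: y -> exists c, y = c *: X.
Proof.
move=> hy.
have Ay i : \sum_j A i j * y j 0 = l0 * y i 0.
  by have := congr1 (fun M : 'M[R]_(n,1) => M i 0) hy; rewrite !mxE.
pose F i := y i 0 / X i 0.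
have [im His] := ex_min F k.
pose c := F im; exists c.
pose w j := y j 0 - c * X j 0.
have w0 j : 0 <= w j.
  by have := His j; rewrite /w subr_ge0 -/c /F ler_pdivlMr ?Xpos.
have Aw i : \sum_j A i j * w j = l0 * w i.
  have -> : \sum_j A i j * w j = \sum_j A i j * y j 0 - c * \sum_j A i j * X j 0.
    by rewrite mulr_sumr -sumrB; apply: eq_bigr => j _; rewrite /w; ring.
  by rewrite Ay AX /w; ring.
apply/matrixP => i j; rewrite ord1 mxE.
suff : w i == 0 by rewrite /w subr_eq0 => /eqP.
apply: (@conn_closed (fun j => w j == 0) _ im); last by rewrite /w /c /F divfK ?subrr // gt_eqF ?Xpos.
move=> a b hab /eqP wa.
have hs : \sum_j A a j * w j <= 0 by rewrite Aw wa mulr0.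
have := nonneg_sum0 (fun j => mulr_ge0 (hadj_ge0 a j) (w0 j)) hs b.
by move/eqP; rewrite mulf_eq0 gt_eqF.
Qed.

Lemma pf_neg (y : 'cV[R]_n) e a b d : e \in E -> a \in e -> b \in e -> d \in e ->
  a != b -> b != d -> a != d ->
  A *m y = - l0 *: y -> y = 0.
Proof.
move=> eE ae be de nab nbd nad hy.
apply/eqP; apply: contraT => ynz.
have [h1 h2] := pf_bound hy ynz.
have l0ge : 0 <= l0 by apply: le_trans h1.
have [c cpos hc] : exists2 c, 0 < c & forall i, `|y i 0| = c * X i 0 by apply: h2; rewrite normrN ger0_norm.
have Ay i : \sum_j A i j * y j 0 = - l0 * y i 0.
  by have := congr1 (fun M : 'M[R]_(n,1) => M i 0) hy; rewrite !mxE.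
have Ayn i : \sum_j A i j * `|y j 0| = l0 * `|y i 0|.
  rewrite hc mulrCA -AX mulr_sumr; apply: eq_bigr => j _; rewrite hc; ring.
have ynz' i : y i 0 != 0 by rewrite -normr_eq0 hc mulf_neq0 ?gt_eqF ?Xpos.
have sgn i k : 0 < A i k -> y i 0 * y k 0 < 0.
  move=> hik; have yk := ynz' k.
  case: (ltgtP (y i 0) 0) => [yi|yi|yi]; last by move: (ynz' i); rewrite yi eqxx.
  - have hs : \sum_j A i j * (`|y j 0| - y j 0) <= 0.
      have -> : \sum_j A i j * (`|y j 0| - y j 0) = l0 * (`|y i 0| + y i 0).
        have -> : \sum_j A i j * (`|y j 0| - y j 0) =
          \sum_j A i j * `|y j 0| - \sum_j A i j * y j 0.
          by rewrite -sumrB; apply: eq_bigr => j _; ring.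
        by rewrite Ayn Ay; ring.
      by rewrite ltr0_norm // addNr mulr0.
    have hge j : 0 <= `|y j 0| - y j 0 by rewrite subr_ge0 ler_norm.
    have := nonneg_sum0 (fun j => mulr_ge0 (hadj_ge0 i j) (hge j)) hs k.
    move/eqP; rewrite mulf_eq0 gt_eqF //= subr_eq0 => /eqP hk.
    have : 0 <= y k 0 by rewrite -hk.
    rewrite le_eqVlt eq_sym (negPf yk) /= => ykp.
    by rewrite (pmulr_llt0 _ ykp).
  - have hs : \sum_j A i j * (`|y j 0| + y j 0) <= 0.
      have -> : \sum_j A i j * (`|y j 0| + y j 0) = l0 * (`|y i 0| - y i 0).
        have -> : \sum_j A i j * (`|y j 0| + y j 0) =
          \sum_j A i j * `|y j 0| + \sum_j A i j * y j 0.
          by rewrite -big_split /=; apply: eq_bigr => j _; rewrite mulrDr.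
        by rewrite Ayn Ay; ring.
      by rewrite gtr0_norm // subrr mulr0.
    have hge j : 0 <= `|y j 0| + y j 0.
      by have h := ler_norm (- y j 0); rewrite normrN in h; lra.
    have := nonneg_sum0 (fun j => mulr_ge0 (hadj_ge0 i j) (hge j)) hs k.
    move/eqP; rewrite mulf_eq0 gt_eqF //= addr_eq0 => /eqP hk.
    have : y k 0 <= 0 by rewrite -oppr_ge0 -hk.
    rewrite le_eqVlt (negPf yk) /= => ykn.
    by rewrite (pmulr_rlt0 _ yi).
have s1 := sgn a b (hadj_gt0 eE ae be nab).
have s2 := sgn b d (hadj_gt0 eE be de nbd).
have s3 := sgn a d (hadj_gt0 eE ae de nad).
have p1 : 0 < (y a 0 * y b 0) * (y b 0 * y d 0) by rewrite (nmulr_rgt0 _ s1).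
have hb : 0 < y b 0 * y b 0 by rewrite -expr2 exprn_even_gt0 // ynz'.
have p2 : (y a 0 * y d 0) * (y b 0 * y b 0) < 0 by rewrite (pmulr_llt0 _ hb).
have : (y a 0 * y b 0) * (y b 0 * y d 0) = (y a 0 * y d 0) * (y b 0 * y b 0) by ring.
by move=> h; rewrite h in p1; move: (lt_trans p1 p2); rewrite ltxx.
Qed.

End PF.
Section CplxAux.
Variable R : realType.
Implicit Types z w : R[i].

Lemma ReD z w : complex.Re (z + w) = complex.Re z + complex.Re w.
Proof. by case: z => ? ?; case: w => ? ?. Qed.
Lemma ImD z w : complex.Im (z + w) = complex.Im z + complex.Im w.
Proof. by case: z => ? ?; case: w => ? ?. Qed.
Lemma ReM z w : complex.Re (z * w) = complex.Re z * complex.Re w - complex.Im z * complex.Im w.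
Proof. by case: z => ? ?; case: w => ? ?. Qed.
Lemma ImM z w : complex.Im (z * w) = complex.Re z * complex.Im w + complex.Im z * complex.Re w.
Proof. by case: z => ? ?; case: w => ? ?. Qed.
Lemma ReJ z : complex.Re (Num.conj_op z) = complex.Re z.
Proof. by case: z. Qed.
Lemma ImJ z : complex.Im (Num.conj_op z) = - complex.Im z.
Proof. by case: z. Qed.
Lemma ReC (x : R) : complex.Re (x%:C)%C = x. Proof. by []. Qed.
Lemma ImC (x : R) : complex.Im (x%:C)%C = 0. Proof. by []. Qed.
Lemma Re_sum (I : finType) (F : I -> R[i]) :
  complex.Re (\sum_i F i) = \sum_i complex.Re (F i).
Proof. exact: (big_morph _ ReD (erefl _)). Qed.
Lemma Im_sum (I : finType) (F : I -> R[i]) :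
  complex.Im (\sum_i F i) = \sum_i complex.Im (F i).
Proof. exact: (big_morph _ ImD (erefl _)). Qed.
Lemma Re1n (b : bool) : complex.Re (b%:R : R[i]) = b%:R.
Proof. by case: b. Qed.
Lemma Im1n (b : bool) : complex.Im (b%:R : R[i]) = 0.
Proof. by case: b. Qed.
End CplxAux.

Lemma char_poly_similar (F : fieldType) (n : nat) (Q D : 'M[F]_n) :
  Q \in unitmx -> char_poly (invmx Q *m D *m Q) = char_poly D.
Proof.
move=> Qu.
pose Qi := map_mx (@polyC F) (invmx Q); pose Qp := map_mx (@polyC F) Q.
have QQ : Qi *m Qp = 1%:M by rewrite -map_mxM mulVmx // map_mx1.
rewrite /char_poly /char_poly_mx !map_mxM -/Qi -/Qp.
rewrite {1}(_ : 'X%:M = Qi *m 'X%:M *m Qp); last first.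
  by rewrite -mulmxA -scalar_mxC mulmxA QQ mul1mx.
rewrite -mulmxBl -mulmxBr !det_mulmx mulrAC -det_mulmx QQ det1 mul1r.
by [].
Qed.


Lemma count_enumI (T : finType) (q : pred T) : count q (enum T) = #|q|.
Proof. by rewrite cardE [in RHS]/enum_mem size_filter -enumT. Qed.

Section RealSpectral.
Local Open Scope sesquilinear_scope.
Variables (R : realType) (n : nat) (A : 'M[R]_n) (lam : 'I_n -> R).
Hypothesis hsym : forall i j, A i j = A j i.
Hypothesis hchar : char_poly A = \prod_(i < n) ('X - (lam i)%:P).

Local Notation C := (R[i]).
Let AC : 'M[C]_n := map_mx (real_complex R) A.

Lemma AC_herm : AC \is hermsymmx.
Proof.
apply: (@realsym_hermsym C n AC).
  by apply/is_hermitianmxP; rewrite expr0 scale1r; apply/matrixP => i j; rewrite !mxE hsym.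
by apply/mxOverP => i j; rewrite mxE complex_real.
Qed.

Let P := spectralmx AC.
Let d := spectral_diag AC.

Lemma hAC : AC = invmx P *m diag_mx d *m P.
Proof. by apply/orthomx_spectralP; exact: hermitian_normalmx AC_herm. Qed.

Lemma Pu : P \is unitarymx. Proof. exact: spectral_unitarymx. Qed.
Lemma invP : invmx P = P ^t*. Proof. exact: invmx_unitary Pu. Qed.
Lemma PP' : P *m P ^t* = 1%:M. Proof. by move: Pu; rewrite qualifE => /eqP. Qed.
Lemma P'P : P ^t* *m P = 1%:M.
Proof. by rewrite -invP mulVmx // unitarymx_unit // Pu. Qed.

Lemma hPA : P *m AC = diag_mx d *m P.
Proof. by rewrite hAC invP !mulmxA PP' mul1mx. Qed.

Lemma d_real j : d 0 j = (complex.Re (d 0 j))%:C%C.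
Proof.
have := hermitian_spectral_diag_real AC_herm => /mxOverP /(_ 0 j).
by case: (d 0 j) => a b; rewrite complex_real => /eqP ->.
Qed.

Definition sm j := complex.Re (d 0 j).
Definition sa j k := complex.Re (P j k).
Definition sb j k := complex.Im (P j k).

Lemma s_complete u v :
  \sum_j (sa j u * sa j v + sb j u * sb j v) = (u == v)%:R.
Proof.
have := congr1 (fun M : 'M[C]_n => complex.Re (M u v)) P'P.
rewrite /= !mxE Re_sum Re1n => <-; apply: eq_bigr => j _.
by rewrite !mxE ReM ReJ ImJ /sa /sb; ring.
Qed.

Lemma s_orth j j' :
  \sum_k (sa j k * sa j' k + sb j k * sb j' k) = (j == j')%:R.
Proof.
have := congr1 (fun M : 'M[C]_n => complex.Re (M j j')) PP'.
rewrite /= !mxE Re_sum Re1n => <-; apply: eq_bigr => k _.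
by rewrite !mxE ReM ReJ ImJ /sa /sb; ring.
Qed.

Lemma s_orthI j j' :
  \sum_k (sb j k * sa j' k - sa j k * sb j' k) = 0.
Proof.
have := congr1 (fun M : 'M[C]_n => complex.Im (M j j')) PP'.
rewrite /= !mxE Im_sum Im1n => h; rewrite -[RHS]h; apply: eq_bigr => k _.
by rewrite !mxE ImM ReJ ImJ /sa /sb; ring.
Qed.

Lemma rowPA j k : \sum_l P j l * AC l k = (sm j)%:C%C * P j k.
Proof.
have := congr1 (fun M : 'M[C]_n => M j k) hPA.
rewrite /= !mxE => ->.
rewrite (bigD1 j) //= big1 ?addr0; last by move=> l /negPf; rewrite !mxE eq_sym => ->; rewrite mulr0n mul0r.
by rewrite !mxE eqxx mulr1n -d_real.
Qed.

Lemma s_eigA j k : \sum_l A k l * sa j l = sm j * sa j k.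
Proof.
rewrite (_ : \sum_l A k l * sa j l = complex.Re (\sum_l P j l * AC l k)); last first.
  by rewrite Re_sum; apply: eq_bigr => l _; rewrite mxE ReM ReC ImC hsym /sa; ring.
by rewrite rowPA ReM ReC ImC /sa; ring.
Qed.

Lemma s_eigB j k : \sum_l A k l * sb j l = sm j * sb j k.
Proof.
rewrite (_ : \sum_l A k l * sb j l = complex.Im (\sum_l P j l * AC l k)); last first.
  by rewrite Im_sum; apply: eq_bigr => l _; rewrite mxE ImM ReC ImC hsym /sb; ring.
by rewrite rowPA ImM ReC ImC /sb; ring.
Qed.

Lemma s_perm : perm_eq [seq sm j | j <- enum 'I_n] [seq lam i | i <- enum 'I_n].
Proof.
have h1 : char_poly AC = \prod_j ('X - ((sm j)%:C%C)%:P).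
  rewrite hAC char_poly_similar ?unitarymx_unit ?Pu //.
  rewrite char_poly_trig ?diag_mx_is_trig //.
  by apply: eq_bigr => j _; rewrite mxE eqxx mulr1n -d_real.
have h2 : char_poly AC = \prod_i ('X - ((lam i)%:C%C)%:P).
  by rewrite -map_char_poly hchar map_prod_XsubC.
have := h1; rewrite h2 => h.
have : perm_eq [seq (sm j)%:C%C | j <- enum 'I_n] [seq (lam i)%:C%C | i <- enum 'I_n].
  apply: prod_XsubC_eq; rewrite !big_map; move: h; rewrite [index_enum _]unlock; exact.
move/(perm_map (@complex.Re R)); rewrite -!map_comp.
by [].
Qed.

End RealSpectral.

Unset Implicit Arguments.
Set Strict Implicit.

Lemma mpow_spec (R : realType) (n : nat) (A : 'M[R]_n) :
  (forall i j, A i j = A j i) -> forall t u v,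
  mpow A t u v = \sum_j sm A j ^+ t * (sa A j u * sa A j v + sb A j u * sb A j v).
Proof.
move=> hsym; elim=> [|t IH] u v.
  rewrite /mpow /= mxE -(s_complete A); apply: eq_bigr => j _; ring.
rewrite /mpow /= -/(mpow A t) mxE.
rewrite (eq_bigr (fun w => (\sum_j sm A j ^+ t * (sa A j u * sa A j w + sb A j u * sb A j w)) * A w v)); last by move=> w _; rewrite IH.
under eq_bigr => w _ do rewrite mulr_suml.
rewrite exchange_big; apply: eq_bigr => j _ /=.
have -> : \sum_w sm A j ^+ t * (sa A j u * sa A j w + sb A j u * sb A j w) * A w v =
   sm A j ^+ t * (sa A j u * \sum_w A v w * sa A j w + sb A j u * \sum_w A v w * sb A j w).
  rewrite !mulr_sumr -big_split mulr_sumr; apply: eq_bigr => w _ /=.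
  rewrite (hsym w v); ring.
rewrite (s_eigA hsym) (s_eigB hsym) exprS; ring.
Qed.

Lemma avg_le (R : realType) (a p q : R) : a <= p -> a <= q -> ((1 - p) + (1 - q))/2 <= 1 - a.
Proof. move=> h1 h2; lra. Qed.

Lemma half_pos (R : realType) (a : R) : 2 * a <= 1 -> 0 < a -> 0 < 1 - a.
Proof. move=> h1 h2; lra. Qed.

Lemma amgm (R : realType) (x y z w : R) : `|x*y + z*w| <= (x^+2 + z^+2 + y^+2 + w^+2)/2.
Proof.
have h1 := sqr_ge0 (x - y); have h2 := sqr_ge0 (z - w).
have h3 := sqr_ge0 (x + y); have h4 := sqr_ge0 (z + w).
rewrite ler_norml; apply/andP; split; nra.
Qed.

Unset Implicit Arguments.
Set Strict Implicit.

Theorem theorem2 (R : realType) (n : nat) (E : {set {set 'I_n}})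
  (lam : 'I_n -> R) (i0 : 'I_n) (X : 'cV[R]_n) :
  (forall e, e \in E -> (2 <= #|e|)%N) ->
  hconnected E ->
  (forall e, e \in E -> (3 <= #|e|)%N) ->
  (exists2 e, e \in E & #|e| = 3%N) ->
  char_poly (hadj R E) = \prod_(i < n) ('X - (lam i)%:P) ->
  (forall i, lam i <= lam i0) ->
  hadj R E *m X = lam i0 *: X ->
  \sum_(i < n) X i 0 ^+ 2 = 1 ->
  (forall i, 0 < X i 0) ->
  let lmax := lam i0 in
  let alpha := \big[Num.min/X i0 0]_(i < n) X i 0 in
  let theta := \big[Num.max/0]_(i < n | i != i0) `|lam i| in
  (hdiam E : int) <=
    Num.floor (1 + ln ((1 - alpha ^+ 2) / alpha ^+ 2) / ln (lmax / theta)).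
Proof.
move=> hE2 hcon _ [e3 e3E e3c] hchar _ hX hX1 Xpos.
cbv zeta.
set A := hadj R E.
set l0 := lam i0.
set alpha := \big[Num.min/X i0 0]_(i < n) X i 0.
set theta := \big[Num.max/0]_(i < n | i != i0) `|lam i|.

have hsym : forall i j, A i j = A j i by move=> i j; apply: hadj_sym.
have [a ae] : exists a, a \in e3 by apply/set0Pn; rewrite -card_gt0 e3c.
have c2 : #|e3 :\ a| = 2%N by have := cardsD1 a e3; rewrite ae e3c add1n; case.
have [b be'] : exists b, b \in e3 :\ a by apply/set0Pn; rewrite -card_gt0 c2.
have c1 : #|e3 :\ a :\ b| = 1%N by have := cardsD1 b (e3 :\ a); rewrite be' c2 add1n; case.
have [d de'] : exists d, d \in e3 :\ a :\ b by apply/set0Pn; rewrite -card_gt0 c1.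
rewrite !in_setD1 in be' de'.
case/andP: be' => nba be; case/and3P: de' => ndb nda de.
have nab : a != b by rewrite eq_sym.
have nbd : b != d by rewrite eq_sym.
have nad : a != d by rewrite eq_sym.
have l0pos : 0 < l0.
  have h : 0 < \sum_j A a j * X j 0.
    rewrite (bigD1 b) /=; last by [].
    apply: (lt_le_trans (mulr_gt0 (hadj_gt0 R hE2 e3E ae be nab) (Xpos b))).
    rewrite lerDl; apply: sumr_ge0 => j _; exact: mulr_ge0 (hadj_ge0 _ _ _ _) (ltW (Xpos j)).
  by move: h; rewrite (AX hX) pmulr_lgt0 ?Xpos.
have eigA j : A *m (\col_k sa A j k) = sm A j *: (\col_k sa A j k).
  apply/matrixP => k z; rewrite ord1 !mxE -(s_eigA hsym j k); apply: eq_bigr => l _.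
  by rewrite !mxE.
have eigB j : A *m (\col_k sb A j k) = sm A j *: (\col_k sb A j k).
  apply/matrixP => k z; rewrite ord1 !mxE -(s_eigB hsym j k); apply: eq_bigr => l _.
  by rewrite !mxE.
have sumX c : \sum_k c * X k 0 ^+ 2 = c by rewrite -mulr_sumr hX1 mulr1.
have row_l0 j : sm A j = l0 -> exists ca cb,
    [/\ forall k, sa A j k = ca * X k 0, forall k, sb A j k = cb * X k 0 & ca ^+ 2 + cb ^+ 2 = 1].
  move=> hj.
  have [ca hca] := pf_eig hE2 hcon hX Xpos a (etrans (eigA j) (congr1 (fun x => x *: _) hj)).
  have [cb hcb] := pf_eig hE2 hcon hX Xpos a (etrans (eigB j) (congr1 (fun x => x *: _) hj)).
  have ha k : sa A j k = ca * X k 0.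
    by have := congr1 (fun M : 'cV[R]_n => M k 0) hca; rewrite !mxE.
  have hb k : sb A j k = cb * X k 0.
    by have := congr1 (fun M : 'cV[R]_n => M k 0) hcb; rewrite !mxE.
  exists ca, cb; split => //.
  have := s_orth A j j; rewrite eqxx.
  under eq_bigr => k _ do rewrite ha hb.
  rewrite (eq_bigr (fun k => (ca ^+ 2 + cb ^+ 2) * X k 0 ^+ 2)) ?sumX //.
  by move=> k _; ring.
have uniq_l0 j1 j2 : sm A j1 = l0 -> sm A j2 = l0 -> j1 = j2.
  move=> h1 h2; apply/eqP; apply: contraT => nj.
  have [ca1 [cb1 [ha1 hb1 n1]]] := row_l0 j1 h1.
  have [ca2 [cb2 [ha2 hb2 n2]]] := row_l0 j2 h2.
  have o1 := s_orth A j1 j2; rewrite (negPf nj) in o1.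
  have o2 := s_orthI A j1 j2.
  rewrite (eq_bigr (fun k => (ca1 * ca2 + cb1 * cb2) * X k 0 ^+ 2)) ?sumX in o1; last by move=> k _; rewrite ha1 hb1 ha2 hb2; ring.
  rewrite (eq_bigr (fun k => (cb1 * ca2 - ca1 * cb2) * X k 0 ^+ 2)) ?sumX in o2; last by move=> k _; rewrite ha1 hb1 ha2 hb2; ring.
  have : (ca1 ^+ 2 + cb1 ^+ 2) * (ca2 ^+ 2 + cb2 ^+ 2) =
     (ca1 * ca2 + cb1 * cb2) ^+ 2 + (cb1 * ca2 - ca1 * cb2) ^+ 2 by ring.
  by rewrite n1 n2 o1 o2 mulr1 expr0n /= addr0 => /eqP; rewrite oner_eq0.
have hp := s_perm hsym hchar.
have [j0 _ hj0] : exists2 j0, j0 \in enum 'I_n & l0 = sm A j0.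
  apply/mapP; rewrite (perm_mem hp); apply/mapP; exists i0 => //; by rewrite mem_enum.
have [ca0 [cb0 [ha0 hb0 nc0]]] := row_l0 j0 (esym hj0).
have AT : A^T = A by apply/matrixP => p q; rewrite mxE hsym.
have gap i : i != i0 -> `|lam i| < l0.
  move=> ni.
  have : eigenvalue A (lam i).
    rewrite eigenvalue_root_char hchar; apply/rootP; rewrite horner_prod.
    apply/eqP/prodf_eq0; exists i => //; by rewrite hornerXsubC subrr.
  case/eigenvalueP => v hv vnz.
  have hy : A *m v^T = lam i *: v^T by rewrite -{1}AT -trmx_mul hv linearZ.
  have ynz : v^T != 0 by rewrite trmx_eq0.
  have [hle heq] := pf_bound hE2 hcon hX Xpos hy ynz.
  rewrite lt_neqAle hle andbT; apply/negP => /eqP habs.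
  case: (lerP 0 (lam i)) => hl.
  - have ei : lam i = l0 by rewrite -habs ger0_norm.
    have cc1 : (1 < #|[pred k | lam k == l0]|)%N.
      by apply/card_gt1P; exists i, i0; rewrite !inE ei eqxx.
    have e1 : #|[pred k | lam k == l0]| = count (pred1 l0) [seq lam k | k <- enum 'I_n].
      by rewrite count_map count_enumI.
    have e2 : #|[pred k | sm A k == l0]| = count (pred1 l0) [seq sm A k | k <- enum 'I_n].
      by rewrite count_map count_enumI.
    rewrite e1 -(permP hp) -e2 in cc1.
    case/card_gt1P: cc1 => j1 [j2 [hj1 hj2 nj]].
    by move: nj; rewrite (uniq_l0 j1 j2 (eqP hj1) (eqP hj2)) eqxx.
  - have ei : lam i = - l0 by rewrite -habs ltr0_norm // opprK.
    rewrite ei in hy.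
    have := pf_neg hE2 hcon hX Xpos e3E ae be de nab nbd nad hy.
    by move/eqP; rewrite (negPf ynz).
have th_ge0 : 0 <= theta by apply: bigmax_ge_id.
have th_lt : theta < l0 by apply: bigmax_lt => // i; exact: gap.
have le_th i : i != i0 -> `|lam i| <= theta by move=> ni; exact: le_bigmax_cond.
have sm_th j : j != j0 -> `|sm A j| <= theta.
  move=> nj.
  have : sm A j \in [seq lam i | i <- enum 'I_n].
    by rewrite -(perm_mem hp); apply/mapP; exists j; rewrite ?mem_enum.
  case/mapP => i _ ei.
  rewrite ei; apply: le_th; apply: contra nj => /eqP ii.
  by apply/eqP; apply: uniq_l0; [rewrite ei ii | rewrite -hj0].
have al_le k : alpha <= X k 0 by apply: bigmin_le.
have al_gt0 : 0 < alpha by apply: lt_bigmin => // i; exact: Xpos.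
have al2 : 2 * alpha ^+ 2 <= 1.
  have hab : X a 0 ^+ 2 + X b 0 ^+ 2 <= 1.
    rewrite -hX1 (bigD1 a) //= (bigD1 b) //= addrA lerDl.
    by apply: sumr_ge0 => k _; apply: sqr_ge0.
  have h1 : alpha ^+ 2 <= X a 0 ^+ 2 by rewrite !expr2 ler_pM // ltW.
  have h2 : alpha ^+ 2 <= X b 0 ^+ 2 by rewrite !expr2 ler_pM // ltW.
  lra.
have a2pos : 0 < alpha ^+ 2 by rewrite exprn_gt0.
have ln_r : 0 <= ln ((1 - alpha ^+ 2) / alpha ^+ 2).
  by apply: ln_ge0; rewrite ler_pdivlMr // mul1r; lra.
have ln_L : 0 <= ln (l0 / theta).
  case: (eqVneq theta 0) => [->|thn0]; first by rewrite invr0 mulr0 ln0.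
  have thp : 0 < theta by rewrite lt_neqAle eq_sym thn0 th_ge0.
  by apply: ln_ge0; rewrite ler_pdivlMr // mul1r ltW.
set D := hdiam E.
rewrite floor_ge_int.
have -> : (D%:Z)%:~R = D%:R :> R by [].
case: (leqP D 1) => hD.
  have h1 : (D%:R : R) <= 1 by rewrite -[1]/(1%:R) ler_nat.
  have h2 : 0 <= ln ((1 - alpha ^+ 2) / alpha ^+ 2) / ln (l0 / theta) by apply: divr_ge0.
  lra.
have n0 : (0 < n)%N by apply: leq_ltn_trans (leq0n i0) (ltn_ord i0).
have cardn : (0 < #|'I_n|)%N by rewrite card_ord.
have [u hu] := bigop.eq_bigmax (fun u => \max_v hdist E u v) cardn.
have [v hv] := bigop.eq_bigmax (fun v => hdist E u v) cardn.
have hD' : D = hdist E u v by rewrite /D /hdiam hu /= hv.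
set t := D.-1.
have tD : D = t.+1 by rewrite /t prednK // (leq_trans _ hD).
have t1 : (0 < t)%N by rewrite -ltnS -tD.
have hz : mpow A t u v = 0.
  apply/eqP; apply: contraT => hnz; have [l hl hpl] := mpow_path hnz.
  have lD : (l < find (hpathb E u v) (iota 0 n))%N.
    by rewrite -[find _ _]/(hdist E u v) -hD' tD ltnS.
  have ln : (l < n)%N.
    by apply: leq_trans lD _; have := find_size (hpathb E u v) (iota 0 n); rewrite size_iota.
  by have := before_find 0 lD; rewrite nth_iota // add0n hpl.
have hs := @mpow_spec R n A hsym t u v.
rewrite hz (bigD1 j0) // -hj0 !ha0 !hb0 in hs.
have hj0t : l0 ^+ t * (ca0 * X u 0 * (ca0 * X v 0) + cb0 * X u 0 * (cb0 * X v 0)) =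
    l0 ^+ t * (X u 0 * X v 0).
  have -> : ca0 * X u 0 * (ca0 * X v 0) + cb0 * X u 0 * (cb0 * X v 0) =
     (ca0 ^+ 2 + cb0 ^+ 2) * (X u 0 * X v 0) by ring.
  by rewrite nc0 mul1r.
pose rest := \sum_(j < n | j != j0) sm A j ^+ t * (sa A j u * sa A j v + sb A j u * sb A j v).
have hs' : 0 = l0 ^+ t * (X u 0 * X v 0) + rest.
  by move: hs; rewrite hj0t => h; exact: (etrans h (erefl _)).
have cu w : \sum_(j | j != j0) (sa A j w * sa A j w + sb A j w * sb A j w) = 1 - X w 0 ^+ 2.
  have := s_complete A w w; rewrite eqxx (bigD1 j0) // ha0 hb0.
  have -> : ca0 * X w 0 * (ca0 * X w 0) + cb0 * X w 0 * (cb0 * X w 0) =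
     (ca0 ^+ 2 + cb0 ^+ 2) * X w 0 ^+ 2 by ring.
  rewrite nc0 mul1r => h.
  apply/eqP; rewrite -(inj_eq (addrI (X w 0 ^+ 2))) [X in _ == X]addrC subrK.
  by apply/eqP; exact: h.
have hrest : `|rest| <= theta ^+ t * (((1 - X u 0 ^+ 2) + (1 - X v 0 ^+ 2)) / 2).
  apply: le_trans (ler_norm_sum _ _ _) _.
  rewrite -(cu u) -(cu v) -big_split mulr_suml mulr_sumr.
  apply: ler_sum => j nj; rewrite normrM normrX.
  apply: ler_pM; [exact: exprn_ge0 | exact: normr_ge0 | | ].
    by apply: lerXn2r; rewrite ?nnegrE ?normr_ge0 // sm_th.
  by apply: le_trans (amgm _ _ _ _ _) _; rewrite /= !expr2 le_eqVlt; apply/orP; left; apply/eqP; ring.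
have key : l0 ^+ t * alpha ^+ 2 <= theta ^+ t * (1 - alpha ^+ 2).
  have e1 : l0 ^+ t * (X u 0 * X v 0) <= `|rest|.
    have -> : l0 ^+ t * (X u 0 * X v 0) = - rest by apply/eqP; rewrite -addr_eq0 -hs'.
    by rewrite -normrN ler_norm.
  have e5 : theta ^+ t * (((1 - X u 0 ^+ 2) + (1 - X v 0 ^+ 2)) / 2) <=
      theta ^+ t * (1 - alpha ^+ 2).
    apply: ler_wpM2l; first exact: exprn_ge0.
    apply: avg_le; by rewrite !expr2 ler_pM // ltW.
  have e4 : l0 ^+ t * alpha ^+ 2 <= l0 ^+ t * (X u 0 * X v 0).
    by rewrite ler_pM2l ?exprn_gt0 // expr2 ler_pM // ltW.
  exact: le_trans e4 (le_trans e1 (le_trans hrest e5)).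
have thp : 0 < theta.
  rewrite lt_neqAle th_ge0 andbT; apply/eqP => th0.
  move: key; rewrite -th0 expr0n eqn0Ngt t1 /= mul0r.
  by rewrite leNgt mulr_gt0 ?exprn_gt0.
have thtp : 0 < theta ^+ t by rewrite exprn_gt0.
have Lgt1 : 1 < l0 / theta by rewrite ltr_pdivlMr // mul1r.
have Lpos : 0 < l0 / theta by apply: lt_trans ltr01 Lgt1.
have rpos : 0 < (1 - alpha ^+ 2) / alpha ^+ 2 by rewrite divr_gt0 // (@half_pos R _ al2 a2pos).
have hLt : (l0 / theta) ^+ t <= (1 - alpha ^+ 2) / alpha ^+ 2.
  rewrite expr_div_n ler_pdivrMr // mulrAC ler_pdivlMr //.
  by rewrite [X in _ <= X]mulrC.
have hln : ln ((l0 / theta) ^+ t) <= ln ((1 - alpha ^+ 2) / alpha ^+ 2).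
  by rewrite ler_ln ?posrE ?exprn_gt0.
rewrite lnXn // in hln.
have lnLp : 0 < ln (l0 / theta) by apply: ln_gt0.
have ht : (t%:R : R) <= ln ((1 - alpha ^+ 2) / alpha ^+ 2) / ln (l0 / theta).
  by rewrite ler_pdivlMr // mulr_natl.
have hDt : (D%:R : R) = t%:R + 1 by rewrite tD -addn1 natrD.
by rewrite hDt addrC lerD2l.
Qed.
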